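(* Let $H$ be a digraph (possibly with loops) and let $D$ be an $H$-colored tournament in which every directed $3$-cycle is an $H$-cycle. Then for every $k \geq 2$, $D$ has a $(k,H)$-kernel.
   Context: All digraphs are finite. A tournament is a digraph in which every two distinct vertices are joined by exactly one arc (no loops, no symmetric arcs). $D$ comes with a map $\rho: A(D)\to V(H)$. For a walk $W=(x_0,\ldots,x_n)$ in $D$, there is an obstruction on $x_i$ if $(\rho(x_{i-1},x_i),\rho(x_i,x_{i+1})) \notin A(H)$; for an open walk this is considered at internal vertices $x_i$, $1\le i\le n-1$, for a closed walk at all $i\in\{0,\ldots,n-1\}$ with indices modulo $n$. $O_H(W)$ is the set of indices with an obstruction; the $H$-length is $l_H(W)=|O_H(W)|+1$ for open $W$ and $|O_H(W)|$ for closed $W$. An $H$-cycle is a directed cycle with no obstructions. A $(k,H)$-kernel ($k\ge2$) is a set $S\subseteq V(D)$ such that for every two distinct $u,v\in S$ every directed $uv$-path in $D$ has $H$-length at least $k$, and for every $x\in V(D)\setminus S$ there is a directed path from $x$ to a vertex of $S$ of $H$-length at most $k-1$. *)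

(* Defs.v *)
From mathcomp Require Import all_boot.
Set Implicit Arguments. Unset Strict Implicit. Unset Printing Implicit Defensive.

Definition tournament (V : finType) (E : rel V) : Prop :=
  (forall x, ~~ E x x) /\
  (forall x y, x != y -> (E x y && ~~ E y x) || (E y x && ~~ E x y)).

Section HColoring.
Variables (V VH : finType) (H : rel VH) (rho : V -> V -> VH).
(* rho x y is the colour of the arc (x,y); only its values on arcs matter. *)

(* obs a b r : number of obstructions on the internal vertices of the walk
   (a, b, r_0, r_1, ...), i.e. at b, r_0, ..., excluding the last vertex. *)
Fixpoint obs (a b : V) (r : seq V) : nat :=
  match r with
  | [::] => 0
  | c :: r' => (~~ H (rho a b) (rho b c)) + obs b c r'
  end.

Definition Hlength (x : V) (p : seq V) : nat :=
  match p with
  | [::] => 1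
  | y :: r => (obs x y r).+1
  end.

(* Number of obstructions of the closed walk c_0 c_1 ... c_{n-1} c_0. *)
Definition closed_obs (c : seq V) : nat :=
  match c with
  | a :: b :: r => obs a b (r ++ [:: a; b])
  | _ => 0
  end.

End HColoring.

Definition dpath (V : finType) (E : rel V) (x : V) (p : seq V) : bool :=
  path E x p && uniq (x :: p).

Definition dcycle (V : finType) (E : rel V) (c : seq V) : bool :=
  cycle E c && uniq c.

Definition Hcycle (V VH : finType) (E : rel V) (H : rel VH)
  (rho : V -> V -> VH) (c : seq V) : Prop :=
  dcycle E c /\ closed_obs H rho c = 0.

Definition kH_kernel (V VH : finType) (E : rel V) (H : rel VH)
  (rho : V -> V -> VH) (k : nat) (S : {set V}) : Prop :=
  (forall u v p, u \in S -> v \in S -> u != v ->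
     dpath E u p -> last u p = v -> k <= Hlength H rho u p) /\
  (forall x, x \notin S -> exists p,
     [/\ dpath E x p, last x p \in S & Hlength H rho x p <= k - 1]).

(* Main.v *)
Require Import Defs.
From mathcomp Require Import all_boot.

Theorem corollary9 (V VH : finType) (E : rel V) (H : rel VH)
  (rho : V -> V -> VH) :
  tournament E ->
  (forall x y z : V, dcycle E [:: x; y; z] -> Hcycle E H rho [:: x; y; z]) ->
  forall k : nat, 2 <= k -> exists S : {set V}, kH_kernel E H rho k S.
Proof.
move=> [Eirr Etot] h3 k hk.
case: (pickP (@predT V)) => [v0 _ | hV]; last first.
  exists set0; split; first by move=> u v p; rewrite inE.
  by move=> x; have := hV x.
pose v := [arg max_(v > v0) #|[set y | E y v]|].
have vmax : forall x, #|[set y | E y x]| <= #|[set y | E y v]|.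
  rewrite /v; case: arg_maxnP => // u _ hu x; exact: hu.
exists [set v]; split.
  move=> u w p; rewrite !inE => /eqP -> /eqP -> ; by rewrite eqxx.
move=> x; rewrite inE => xv.
have hk1 : 1 <= k - 1 by rewrite subn_gt0.
have := Etot x v xv; case/orP => /andP [Exv nEvx].
  exists [:: v]; split => //; last by rewrite inE.
  by rewrite /dpath /= Exv /= inE xv.
have [w /andP [Exw Ewv]] : exists w, E x w && E w v.
  case: (boolP [exists w, E x w && E w v]) => [/existsP // |].
  rewrite negb_exists => /forallP hw; exfalso.
  have : [set y | E y v] \proper [set y | E y x].
    apply/properP; split.
      apply/subsetP => y; rewrite !inE => Eyv.
      case: (eqVneq y x) Eyv => [-> Exv' | yx Eyv]; first by rewrite Exv' in nEvx.
      have := Etot y x yx; case/orP => /andP [] // Exy _.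
      by have := hw y; rewrite Exy Eyv.
    by exists v; rewrite !inE ?Exv ?Eirr.
  by move/proper_card; rewrite ltnNge vmax.
have xw : x != w by apply: contraNneq (Eirr x) => {2}->.
have wv : w != v by apply: contraNneq (Eirr w) => {2}->.
have dp : dpath E x [:: w; v].
  by rewrite /dpath /= Exw Ewv !inE !negb_or xw xv wv.
case hH : (H (rho x w) (rho w v)).
  exists [:: w; v]; split => //; first by rewrite inE.
  by rewrite /Hlength /= hH.
have : dcycle E [:: x; w; v].
  by rewrite /dcycle /= Exw Ewv Exv /= !inE !negb_or xw xv wv.
move/h3 => [_]; by rewrite /closed_obs /= hH.
Qed.
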